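(* Let $n, r, d$ be positive integers with $n\geqslant r+1$ and $d\geqslant2$. Then $\mathcal{C}_r^d$ is a percolating set of $K_n^d$ in the $r$-neighbor bootstrap percolation process.
   Context: All graphs are finite, simple and undirected. For a nonnegative integer $r$ and a graph $G$, the $r$-neighbor bootstrap percolation process on $G$ starts with a set $A_0\subseteq V(G)$ of initially active vertices, and for $i\geqslant 1$, $A_i=A_{i-1}\cup\{v\in V(G) : |N(v)\cap A_{i-1}|\geqslant r\}$. The set $A_0$ is a percolating set if $\bigcup_{i\geqslant 0}A_i=V(G)$. $K_n^d$ has vertex set $[\![n]\!]^d$, where $[\![n]\!]=\{0,1,\ldots,n-1\}$, and two vertices are adjacent iff they differ in exactly one coordinate. Let $\delta=(d-2)/(d-1)$. For $t=(t_1,\ldots,t_d)\in\{0,1\}^d$ and $P\subseteq[\![n]\!]^d$, let $P(t)$ be the set of $(x_1,\ldots,x_d)\in[\![n]\!]^d$ for which there is $(p_1,\ldots,p_d)\in P$ with $x_i=t_i(n-1-p_i)+(1-t_i)p_i$ for all $i$. Let $A_r^d=\{(x_1,\ldots,x_d)\in[\![n]\!]^d : \sum_{i=1}^d x_i\leqslant\lceil r/2\rceil-1\}$, $B_r^d=\{(x_1,\ldots,x_d)\in[\![n]\!]^d : x_1+x_2+\delta\sum_{i=3}^d x_i<\delta(\lceil r/2\rceil-1)\}$, $C_r^d=A_r^d\setminus B_r^d$, $T=\{(t_1,\ldots,t_d)\in\{0,1\}^d : t_1=t_2\}$, and $\mathcal{C}_r^d=\bigcup_{t\in T}C_r^d(t)$.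 *)

(* Defs.v *)
From HB Require Import structures.
From mathcomp Require Import all_boot all_order all_algebra.
Set Implicit Arguments. Unset Strict Implicit. Unset Printing Implicit Defensive.
Import Order.TTheory GRing.Theory Num.Theory.

Definition vtx (n d : nat) := {ffun 'I_d -> 'I_n}.

Definition adjK (n d : nat) (x y : vtx n d) : bool :=
  #|[set i | x i != y i]| == 1%N.

Fixpoint boot (n d r : nat) (A0 : {set vtx n d}) (k : nat) : {set vtx n d} :=
  match k with
  | 0 => A0
  | k'.+1 => let A := boot r A0 k' in
      A :|: [set v : vtx n d | (r <= #|[set u | adjK v u && (u \in A)]|)%N]
  end.

Definition percolating (n d r : nat) (A0 : {set vtx n d}) : Prop :=
  forall v : vtx n d, exists k, v \in boot r A0 k.

Definition cr (r : nat) : nat := (uphalf r).-1.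

Definition delta (d : nat) : rat := ((d%:R - 2) / (d%:R - 1))%R.

Definition Aset (n d r : nat) : {set vtx n d} :=
  [set x : vtx n d | (\sum_(i < d) (x i : nat) <= cr r)%N].

Definition wt (d : nat) (i : 'I_d) : rat := if (i < 2)%N then 1%R else delta d.

Definition Bset (n d r : nat) : {set vtx n d} :=
  [set x : vtx n d | (\sum_(i < d) wt i * ((x i : nat)%:R) < delta d * (cr r)%:R)%R].

Definition Cset (n d r : nat) : {set vtx n d} := Aset n d r :\: Bset n d r.

Definition refl (n d : nat) (t : {ffun 'I_d -> bool}) (p : vtx n d) : vtx n d :=
  [ffun i => if t i then rev_ord (p i) else p i].

Definition reflset (n d : nat) (P : {set vtx n d}) (t : {ffun 'I_d -> bool})
  : {set vtx n d} := [set x : vtx n d | [exists p in P, x == refl t p]].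

(* value of t at the coordinate with (0-based) index k *)
Definition tc (d : nat) (t : {ffun 'I_d -> bool}) (k : nat) : bool :=
  [exists i : 'I_d, (val i == k) && t i].

Definition Tset (d : nat) : {set {ffun 'I_d -> bool}} := [set t | tc t 0 == tc t 1].

Definition calC (n d r : nat) : {set vtx n d} :=
  \bigcup_(t in Tset d) reflset (Cset n d r) t.

(* Main.v *)
Require Import Defs.
From mathcomp Require Import all_boot all_order all_algebra.
From mathcomp Require Import zify.
Set Implicit Arguments. Unset Strict Implicit. Unset Printing Implicit Defensive.
Import Order.TTheory GRing.Theory Num.Theory.

Definition upd (n d : nat) (v : vtx n d) (i : 'I_d) (b : 'I_n) : vtx n d :=
  [ffun j => if j == i then b else v j].

Definition setb (d : nat) (t : {ffun 'I_d -> bool}) (i : 'I_d) (bb : bool) : {ffun 'I_d -> bool} :=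
  [ffun j => if j == i then bb else t j].

Lemma reflK n d (t : {ffun 'I_d -> bool}) (x : vtx n d) : refl t (refl t x) = x.
Proof. apply/ffunP => j; rewrite /refl !ffunE; case: (t j) => //; exact: rev_ordK. Qed.

Lemma refl_upd n d t (x : vtx n d) i k :
  refl t (upd x i k) = upd (refl t x) i (if t i then rev_ord k else k).
Proof.
apply/ffunP => j; rewrite /refl /upd !ffunE.
by case: (eqVneq j i) => [->|_].
Qed.

Lemma refl_setb_upd n d t (x : vtx n d) i k :
  refl (setb t i (~~ t i)) (upd x i k) = refl t (upd x i (rev_ord k)).
Proof.
apply/ffunP => j; rewrite /refl /upd /setb !ffunE.
case: (eqVneq j i) => [->|_] //.
by case: (t i) => //=; rewrite rev_ordK.
Qed.

Lemma tc_setb d t (i : 'I_d) bb k : (2 <= i)%N -> (k < 2)%N -> tc (setb t i bb) k = tc t k.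
Proof.
move=> hi hk; rewrite /tc; apply: eq_existsb => j; rewrite /setb ffunE.
case: (eqVneq j i) => [->|//].
have -> : (val i == k) = false by apply/eqP => e; rewrite e in hi; lia.
by [].
Qed.

Lemma setb_T d t (i : 'I_d) bb : (2 <= i)%N -> t \in Tset d -> setb t i bb \in Tset d.
Proof. by move=> hi; rewrite !inE !tc_setb. Qed.

Lemma refl_calC n d r t (x : vtx n d) : t \in Tset d -> x \in Cset n d r -> refl t x \in calC n d r.
Proof.
move=> ht hx; apply/bigcupP; exists t => //; rewrite inE; apply/existsP; exists x.
by rewrite hx eqxx.
Qed.

Lemma card_ge n (P : pred 'I_n) (s : seq nat) : uniq s ->
  (forall k, k \in s -> exists2 b : 'I_n, val b = k & P b) -> size s <= #|[set b | P b]|.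
Proof.
move=> us hs; rewrite cardE -(size_map val).
apply: uniq_leq_size => // k /hs [b <- Pb].
by apply: map_f; rewrite mem_enum inE.
Qed.

Definition cnt (n d : nat) (S : {set vtx n d}) (v : vtx n d) (i : 'I_d) : nat :=
  #|[set b : 'I_n | (b != v i) && (upd v i b \in S)]|.

Lemma rev_eq n (a b : 'I_n) : (rev_ord a == b) = (a == rev_ord b).
Proof. by apply/eqP/eqP => [<-|->]; rewrite rev_ordK. Qed.

Lemma cnt_refl n d (S : {set vtx n d}) t (x : vtx n d) i :
  cnt S (refl t x) i = #|[set b : 'I_n | (b != x i) && (refl t (upd x i b) \in S)]|.
Proof.
rewrite /cnt; case ti : (t i).
  rewrite -(card_imset _ (@rev_ord_inj n)); apply: eq_card => b.
  apply/idP/idP.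
    case/imsetP => b' hb' ->; move: hb'.
    by rewrite !inE refl_upd ti rev_ordK /refl ffunE ti rev_eq.
  move=> hb; apply/imsetP; exists (rev_ord b); last by rewrite rev_ordK.
  move: hb; by rewrite !inE refl_upd ti /refl ffunE ti -rev_eq rev_ordK.
apply: eq_card => b; rewrite !inE refl_upd ti /refl ffunE ti //.
Qed.

Lemma cnt_ge_refl n d (S : {set vtx n d}) t (x : vtx n d) i (s : seq nat) : uniq s ->
  (forall k, k \in s -> exists2 b : 'I_n, val b = k & (b != x i) && (refl t (upd x i b) \in S)) ->
  size s <= cnt S (refl t x) i.
Proof. by move=> us hs; rewrite cnt_refl; apply: card_ge. Qed.

Lemma cnt_ge n d (S : {set vtx n d}) (x : vtx n d) i (s : seq nat) : uniq s ->
  (forall k, k \in s -> exists2 b : 'I_n, val b = k & (b != x i) && (upd x i b \in S)) ->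
  size s <= cnt S x i.
Proof. by move=> us hs; apply: card_ge. Qed.
Lemma upd_same n d (v : vtx n d) i b : upd v i b i = b.
Proof. by rewrite /upd ffunE eqxx. Qed.

Lemma upd_other n d (v : vtx n d) i j b : j != i -> upd v i b j = v j.
Proof. by rewrite /upd ffunE => /negbTE ->. Qed.

Lemma adj_upd n d (v : vtx n d) i b : b != v i -> adjK v (upd v i b).
Proof.
move=> hb; rewrite /adjK.
suff -> : [set j | v j != upd v i b j] = [set i] by rewrite cards1.
apply/setP => j; rewrite !inE /upd ffunE.
by case: (eqVneq j i) => [->|_]; rewrite ?eqxx // eq_sym.
Qed.

Lemma sum_cnt_le n d (S : {set vtx n d}) v :
  \sum_(i < d) cnt S v i <= #|[set u | adjK v u && (u \in S)]|.
Proof.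
pose P := [set p : 'I_d * 'I_n | (p.2 != v p.1) && (upd v p.1 p.2 \in S)].
have -> : \sum_(i < d) cnt S v i = #|P|.
  transitivity (\sum_(i < d) \sum_(b < n) (if (i, b) \in P then 1 else 0)).
    apply: eq_bigr => i _; rewrite /cnt -sum1_card big_mkcond /=.
    by apply: eq_bigr => b _; rewrite !inE.
  by rewrite pair_bigA -sum1_card [RHS]big_mkcond; apply: eq_bigr => [[i b]] _.
pose f (p : 'I_d * 'I_n) := upd v p.1 p.2.
have finj : {in P &, injective f}.
  move=> [i b] [i' b'] hP hP'; move: hP hP'; rewrite !inE /= => /andP [hb _] /andP [hb' _] e.
  case: (eqVneq i i') => [ei|ni].
    subst i'; congr (_, _).
    by have := congr1 (fun w : vtx n d => w i) e; rewrite /f /= !upd_same.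
  have := congr1 (fun w : vtx n d => w i) e; rewrite /f /= upd_same upd_other //.
  by move=> eb; rewrite eb eqxx in hb.
rewrite -(card_in_imset finj); apply: subset_leq_card.
apply/subsetP => u /imsetP [[i b]] hP ->; move: hP; rewrite /P !inE /= => /andP [hb hS].
by rewrite /f /= adj_upd.
Qed.
Definition Usum (n d : nat) (x : vtx n d) : nat := \sum_(i < d | i < 2) (x i : nat).
Definition Ssum (n d : nat) (x : vtx n d) : nat := \sum_(i < d | ~~ (i < 2)) (x i : nat).

Lemma notB (n d r : nat) (x : vtx n d) : (2 <= d)%N ->
  (x \notin Bset n d r) = ((d - 2) * cr r <= (d - 1) * Usum x + (d - 2) * Ssum x)%N.
Proof.
move=> d2; rewrite /Bset inE.
rewrite (bigID (fun i : 'I_d => (i < 2)%N)) /=.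
have e1 : (\sum_(i < d | (i < 2)%N) wt i * ((x i : nat)%:R : rat) = (Usum x)%:R)%R.
  rewrite /Usum natr_sum; apply: eq_bigr => i hi; by rewrite /wt hi mul1r.
have e2 : (\sum_(i < d | ~~ (i < 2)%N) wt i * ((x i : nat)%:R : rat) = delta d * (Ssum x)%:R)%R.
  rewrite /Ssum natr_sum mulr_sumr; apply: eq_bigr => i hi; by rewrite /wt (negbTE hi).
rewrite e1 e2 /delta.
have hb : ((0 : rat) < (d%:R - 1))%R by rewrite subr_gt0 ltr1n.
have ea : ((d%:R - 2 : rat) = (d - 2)%N%:R)%R by rewrite natrB.
have eb : ((d%:R - 1 : rat) = (d - 1)%N%:R)%R by rewrite natrB // ltnW.
rewrite -(ltr_pM2r hb) mulrDl -!mulrA !(mulrC _ (d%:R - 1)%R) !mulrA.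
rewrite -!(mulrA _ (d%:R -1)^-1)%R mulVf ?(gt_eqF hb) // !mulr1.
rewrite ea eb -!natrM -natrD ltr_nat -leqNgt.
by rewrite !(mulnC (d-1)) !(mulnC (d-2)) .
Qed.

Lemma boot_incr n d r (A0 : {set vtx n d}) k : boot r A0 k \subset boot r A0 k.+1.
Proof. by rewrite /= subsetUl. Qed.

Lemma boot_sub n d r (A0 : {set vtx n d}) k : A0 \subset boot r A0 k.
Proof.
elim: k => [|k IH] //=; exact: subset_trans IH (subsetUl _ _).
Qed.

Lemma boot_fix n d r (A0 : {set vtx n d}) : exists k, boot r A0 k.+1 = boot r A0 k.
Proof.
have H : forall k, (exists k', boot r A0 k'.+1 = boot r A0 k') \/ (k <= #|boot r A0 k|)%N.
  elim=> [|k [IH|IH]]; [by right| by left|].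
  case: (eqVneq (boot r A0 k.+1) (boot r A0 k)) => [e|ne]; first by left; exists k.
  right; apply: leq_ltn_trans IH _; apply: proper_card.
  by rewrite properEneq eq_sym ne boot_incr.
case: (H #|vtx n d|.+1) => // hc.
have := subset_leq_card (subsetT (boot r A0 #|vtx n d|.+1)); rewrite cardsT => h; by move: (leq_trans hc h); rewrite ltnn.
Qed.

Lemma closed_fix n d r (A0 : {set vtx n d}) k : boot r A0 k.+1 = boot r A0 k ->
  forall v, (r <= \sum_(i < d) cnt (boot r A0 k) v i)%N -> v \in boot r A0 k.
Proof.
move=> e v h; rewrite -e /= inE; apply/orP; right; rewrite inE.
exact: leq_trans h (sum_cnt_le _ _).
Qed.

Lemma cr_facts r : (0 < r)%N -> (r <= (cr r).*2.+2)%N /\ ((cr r).*2.+1 <= r)%N.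
Proof. rewrite /cr => hr; lia. Qed.

Lemma sum_lt2 d (F : 'I_d -> nat) (h0 : (0 < d)%N) (h1 : (1 < d)%N) :
  \sum_(i < d | (i < 2)%N) F i = F (Ordinal h0) + F (Ordinal h1).
Proof.
rewrite (bigD1 (Ordinal h0)) //= (bigD1 (Ordinal h1)) //= big1 ?addn0 //.
move=> [[|[|k]] hk] /=; rewrite ?andbF ?andbT //.
all: try by move=> /andP [_ /eqP []]; apply/val_inj.
Qed.

Lemma sum_ge2_const d c : (2 <= d)%N -> \sum_(i < d | ~~ (i < 2)%N) c = (d - 2) * c.
Proof.
move=> d2; have h0 : (0 < d)%N by lia. have h1 : (1 < d)%N by lia.
have := sum_nat_const_nat 0 d c; rewrite big_mkord (bigID (fun i : 'I_d => (i < 2)%N)) /=.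
rewrite (sum_lt2 (fun _ => c) h0 h1) subn0 mulnBl => e.
rewrite -e; lia.
Qed.

Definition sig n d (x : vtx n d) : nat := \sum_(i < d) (x i : nat).

Lemma sum_split n d (x : vtx n d) : sig x = Usum x + Ssum x.
Proof. by rewrite /sig (bigID (fun i : 'I_d => (i < 2)%N)). Qed.

Lemma sum_upd n d (P : pred 'I_d) (x : vtx n d) i k :
  \sum_(j < d | P j) (upd x i k j : nat) + (if P i then x i : nat else 0) =
  \sum_(j < d | P j) (x j : nat) + (if P i then k : nat else 0).
Proof.
case Pi : (P i).
  rewrite (bigD1 i) //= [in RHS](bigD1 i) //= upd_same.
  have -> : \sum_(j < d | P j && (j != i)) (upd x i k j : nat) =
            \sum_(j < d | P j && (j != i)) (x j : nat).
    by apply: eq_bigr => j /andP [_ ne]; rewrite upd_other.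
  by rewrite -addnA addnC; congr (_ + _); rewrite addnC.
have -> : \sum_(j < d | P j) (upd x i k j : nat) = \sum_(j < d | P j) (x j : nat).
  apply: eq_bigr => j Pj; rewrite upd_other //.
  by apply/eqP => e; rewrite e Pi in Pj.
by [].
Qed.

Lemma le_sum_one n d (x : vtx n d) i : (x i <= sig x)%N.
Proof. by rewrite /sig (bigD1 i) //= leq_addr. Qed.

Lemma sum_upd_all n d (x : vtx n d) i k :
  sig (upd x i k) + x i = sig x + k.
Proof. exact: (sum_upd xpredT x i k). Qed.

Lemma part1 n d r (S : {set vtx n d}) : (2 <= d)%N -> (r.+1 <= n)%N -> (0 < r)%N ->
  calC n d r \subset S ->
  (forall v, (r <= \sum_(i < d) cnt S v i)%N -> v \in S) ->
  forall t (x : vtx n d), t \in Tset d -> (\sum_(i < d) (x i : nat) <= cr r)%N -> refl t x \in S.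
Proof.
move=> d2 hn hr hC hcl.
have [hr1 hr2] := cr_facts hr.
set c := cr r in hr1 hr2 *.
have hnc : (c.*2.+2 <= n)%N by lia.
suff main : forall m s t (x : vtx n d), c - Usum x = m -> Ssum x = s -> t \in Tset d ->
    (sig x <= c)%N -> refl t x \in S.
  by move=> t x; apply: (main _ _ t x erefl erefl).
elim/ltn_ind => m IHm.
elim/ltn_ind => s IHs t x hm hs ht hsig.
case hxC: (x \in Cset n d r).
  by apply: (subsetP hC); apply: refl_calC.
have hB : ((d - 1) * Usum x + (d - 2) * Ssum x < (d - 2) * c)%N.
  have hA : x \in Aset n d r by rewrite inE.
  move: hxC; rewrite /Cset inE hA andbT => /negbFE hxB.
  by have := notB r x d2; rewrite hxB /= => /esym /negbT; rewrite -ltnNge.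
have hsplit := sum_split x.
set U := Usum x in hm hB hsplit *; set Sx := Ssum x in hs hB hsplit *.
set D := c - (U + Sx).
have hDdef : D = c - (U + Sx) := erefl.
have d3 : (0 < d - 2)%N.
  by move: hB; case: (d - 2) => [|//]; rewrite !mul0n ltn0.
set q := U %/ (d - 2).
have hq1 : ((d - 2) * q <= U)%N by rewrite mulnC leq_divM.
have hq2 : (U < (d - 2) * q.+1)%N by rewrite mulnC ltn_ceil.
have e1 : ((d - 1) * U = (d - 2) * U + U)%N.
  have -> : (d - 1 = (d - 2).+1)%N by lia.
  by rewrite mulSn addnC.
have e2 : ((d - 2) * c = (d - 2) * U + (d - 2) * Sx + (d - 2) * D)%N.
  by rewrite -!mulnDr; congr (_ * _); lia.
have hqD : (q < D)%N by rewrite -(ltn_pmul2l d3); lia.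
apply: hcl.
have hf : forall i : 'I_d, ((if (i < 2)%N then D else 2 * x i + 2 * q.+1) <= cnt S (refl t x) i)%N.
  move=> i; case: ifP => hi.
    have := @cnt_ge_refl n d S t x i (iota (x i).+1 D) (iota_uniq _ _).
    rewrite size_iota; apply => k; rewrite mem_iota => /andP [hk1 hk2].
    have hxi := le_sum_one x i.
    have hkn : (k < n)%N by lia.
    exists (Ordinal hkn) => //=; apply/andP; split.
      by apply/eqP => e; have := congr1 val e => /=; lia.
    set x' := upd x i (Ordinal hkn).
    have eU := sum_upd (fun j : 'I_d => (j < 2)%N) x i (Ordinal hkn).
    rewrite hi /= -/(Usum x') -/(Usum x) -/U in eU.
    have eS := sum_upd_all x i (Ordinal hkn); rewrite -/x' /= in eS.
    have hs' := sum_split x'.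
    apply: (IHm _ _ _ t x' erefl erefl ht) => //.
    have h1 : (U < Usum x')%N by lia.
    have h2 : (Usum x' <= c)%N by lia.
    rewrite -hm; lia. lia.
  set s0 := iota 0 (x i) ++ iota (x i + (D - q)) q.+1.
  have hxi := le_sum_one x i.
  have good : forall k, k \in s0 -> (k <= c)%N /\ exists2 b : 'I_n, val b = k &
      (b != x i) /\ forall t', t' \in Tset d -> refl t' (upd x i b) \in S.
    move=> k; rewrite mem_cat !mem_iota add0n => /orP [/andP [_ hk]|/andP [hk1 hk2]].
      split; first by lia.
      have hkn : (k < n)%N by lia.
      exists (Ordinal hkn) => //; split.
        by apply/eqP => e; have := congr1 val e => /=; lia.
      move=> t' ht'.
      set x' := upd x i (Ordinal hkn).
      have eU := sum_upd (fun j : 'I_d => (j < 2)%N) x i (Ordinal hkn).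
      rewrite hi /= -/(Usum x') -/(Usum x) -/U in eU.
      have eS' := sum_upd (fun j : 'I_d => ~~ (j < 2)%N) x i (Ordinal hkn).
      rewrite hi /= -/(Ssum x') -/(Ssum x) -/Sx in eS'.
      have eS := sum_upd_all x i (Ordinal hkn); rewrite -/x' /= in eS.
      have hs' := sum_split x'.
      apply: (IHs (Ssum x') _ t' x') => //; lia.
    split; first by lia.
    have hkn : (k < n)%N by lia.
    exists (Ordinal hkn) => //; split.
      by apply/eqP => e; have := congr1 val e => /=; lia.
    move=> t' ht'.
    set x' := upd x i (Ordinal hkn).
    have eU := sum_upd (fun j : 'I_d => (j < 2)%N) x i (Ordinal hkn).
    rewrite hi /= -/(Usum x') -/(Usum x) -/U in eU.
    have eS' := sum_upd (fun j : 'I_d => ~~ (j < 2)%N) x i (Ordinal hkn).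
    rewrite hi /= -/(Ssum x') -/(Ssum x) -/Sx in eS'.
    have eS := sum_upd_all x i (Ordinal hkn); rewrite -/x' /= in eS.
    apply: (subsetP hC); apply: refl_calC => //.
    rewrite /Cset inE; apply/andP; split; last by rewrite inE -/(sig x'); lia.
    rewrite notB //.
    have hle : (c <= Usum x' + Ssum x' + q)%N by lia.
    have := leq_mul2l (d - 2) c (Usum x' + Ssum x' + q); rewrite hle orbT => h.
    have e3 : Usum x' = U by lia.
    rewrite e3 e1; rewrite e3 !mulnDr in h; lia.
  have hi2 : (2 <= i)%N by rewrite leqNgt hi.
  pose g k := n - k.+1.
  have hxic : (x i <= c)%N by lia.
  have := @cnt_ge_refl n d S t x i (s0 ++ map g s0).
  rewrite size_cat size_map size_cat !size_iota.
  have -> : (x i + q.+1 + (x i + q.+1) = 2 * x i + 2 * q.+1)%N by lia.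
  apply.
    have us0 : uniq s0.
      rewrite /s0 cat_uniq !iota_uniq andbT andTb.
      by apply/hasPn => k; rewrite !mem_iota; lia.
    rewrite cat_uniq map_inj_in_uniq; first last.
      by move=> k1 k2 /good [h1 _] /good [h2 _]; rewrite /g; lia.
    rewrite us0 andbT andTb.
    apply/hasPn => k' /mapP [k /good [hk _] ->].
    by apply/negP => /good [h _]; rewrite /g in h; lia.
  move=> k; rewrite mem_cat => /orP [/good [_ [b hb [hb1 hb2]]]|].
    by exists b => //; rewrite hb1 hb2.
  case/mapP => k0 /good [hk0 [b hb [hb1 hb2]]] ->.
  exists (rev_ord b); first by rewrite /= hb.
  apply/andP; split.
    have hb' : nat_of_ord b = k0 by [].
    by apply/eqP => e; have := congr1 val e => /=; lia.
  rewrite -refl_setb_upd; apply: hb2; exact: setb_T.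
have hsum : (\sum_(i < d) (if (i < 2)%N then D else 2 * x i + 2 * q.+1) <=
  \sum_(i < d) cnt S (refl t x) i)%N by apply: leq_sum => i _; exact: hf i.
apply: (leq_trans hr1); apply: (leq_trans _ hsum).
rewrite (bigID (fun i : 'I_d => (i < 2)%N)) /=.
have h0 : (0 < d)%N by lia. have h1 : (1 < d)%N by lia.
rewrite (eq_bigr (fun _ => D)); last by move=> i ->.
rewrite (sum_lt2 (fun _ => D) h0 h1).
rewrite (eq_bigr (fun i : 'I_d => 2 * x i + 2 * q.+1)%N); last by move=> i /negbTE ->.
rewrite big_split /= sum_ge2_const // -big_distrr /= -/(Ssum x) -/Sx.
have e4 : ((d - 2) * (2 * q.+1) = 2 * ((d - 2) * q.+1))%N by rewrite mulnCA.
rewrite e4; lia.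
Qed.

Lemma cnt_seq n d (S : {set vtx n d}) (v : vtx n d) i (s : seq nat) : uniq s ->
  (forall k : nat, k \in s -> (k < n)%N) -> (forall k : nat, k \in s -> k <> v i :> nat) ->
  (forall b : 'I_n, nat_of_ord b \in s -> upd v i b \in S) -> (size s <= cnt S v i)%N.
Proof.
move=> us h1 h2 h3; apply: cnt_ge => // k hk.
exists (Ordinal (h1 k hk)) => //; apply/andP; split; first by apply/eqP => /(congr1 val) /= /(h2 k hk).
exact: h3.
Qed.

Definition insl n d (j : nat) (v0 v : vtx n d) : Prop := forall i : 'I_d, (j <= i)%N -> v i = v0 i.

Lemma insl_upd n d j (v0 v : vtx n d) (i : 'I_d) (b : 'I_n) : (i < j)%N -> insl j v0 v -> insl j v0 (upd v i b).
Proof.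
move=> hi hv k hk; rewrite upd_other ?hv //.
by apply/eqP => e; rewrite e in hk; lia.
Qed.

Definition GLprop n d r (S : {set vtx n d}) (j : nat) := forall (v0 : vtx n d) (rho e : nat),
  (forall v, insl j v0 v -> (e <= \sum_(i < d | ~~ (i < j)%N) cnt S v i)%N) ->
  (r <= e + rho.*2.+2)%N -> (rho.*2.+2 <= n)%N ->
  (forall v t, insl j v0 v -> t \in Tset d ->
     (\sum_(i < d | (i < j)%N) (refl t v i : nat) <= rho)%N -> v \in S) ->
  forall v, insl j v0 v -> v \in S.

Lemma tF_T d : [ffun _ : 'I_d => false] \in Tset d.
Proof.
have h : forall k, tc [ffun _ : 'I_d => false] k = false.
  by move=> k; apply/existsP => -[i]; rewrite ffunE andbF.
by rewrite inE !h.
Qed.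

Lemma tT_T d : (2 <= d)%N -> [ffun _ : 'I_d => true] \in Tset d.
Proof.
move=> d2.
have h : forall k, (k < d)%N -> tc [ffun _ : 'I_d => true] k = true.
  by move=> k hk; apply/existsP; exists (Ordinal hk); rewrite ffunE eqxx.
by rewrite inE !h //; lia.
Qed.

Lemma GL2 n d r (S : {set vtx n d}) : (2 <= d)%N ->
  (forall v, (r <= \sum_(i < d) cnt S v i)%N -> v \in S) -> GLprop r S 2.
Proof.
move=> d2 hcl v0 rho e H1 H2 Hn H3.
have h0 : (0 < d)%N by lia. have h1 : (1 < d)%N by lia.
set i0 := Ordinal h0; set i1 := Ordinal h1.
have i10 : i1 != i0 by apply/eqP => /(congr1 val).
have i01 : i0 != i1 by rewrite eq_sym.
have H3F : forall v, insl 2 v0 v -> (v i0 + v i1 <= rho)%N -> v \in S.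
  move=> v hv hs; apply: (H3 v _ hv (tF_T d)).
  by rewrite (sum_lt2 _ h0 h1) /refl !ffunE.
have H3T : forall v, insl 2 v0 v -> (n - (v i0).+1 + (n - (v i1).+1) <= rho)%N -> v \in S.
  move=> v hv hs; apply: (H3 v _ hv (tT_T d2)).
  by rewrite (sum_lt2 _ h0 h1) /refl !ffunE.
have hclos : forall v, insl 2 v0 v -> (r <= e + cnt S v i0 + cnt S v i1)%N -> v \in S.
  move=> v hv hr; apply: hcl; rewrite (bigID (fun i : 'I_d => (i < 2)%N)) /=.
  rewrite (sum_lt2 _ h0 h1); apply: (leq_trans hr); rewrite -addnA [X in (_ <= X)%N]addnC leq_add2r; exact: H1 v hv.
have ins0 : forall v b, insl 2 v0 v -> insl 2 v0 (upd v i0 b) by move=> v b; apply: insl_upd.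
have ins1 : forall v b, insl 2 v0 v -> insl 2 v0 (upd v i1 b) by move=> v b; apply: insl_upd.
have claim : forall k v, insl 2 v0 v -> ((v i0 < k)%N \/ (n.-1 - k < v i1)%N) -> v \in S.
  elim=> [|k Ck].
    move=> v _ [//|h]; exfalso; have := ltn_ord (v i1); lia.
  case: (leqP r (e + k.*2)) => hrk.
    move=> v hv _.
    case: (ltnP (v i0) k) => ha; first by apply: Ck => //; left.
    case: (ltnP (n.-1 - k) (v i1)) => hb; first by apply: Ck => //; right.
    apply: hclos => //.
    have c0 : (k <= cnt S v i0)%N.
      have := @cnt_seq n d S v i0 (iota 0 k) (iota_uniq _ _); rewrite size_iota; apply.
      - by move=> k'; rewrite mem_iota; have := ltn_ord (v i0); lia.
      - by move=> k'; rewrite mem_iota; lia.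
      by move=> b; rewrite mem_iota => hb'; apply: Ck; [exact: ins0|left; rewrite upd_same; lia].
    have c1 : (k <= cnt S v i1)%N.
      have := @cnt_seq n d S v i1 (iota (n - k) k) (iota_uniq _ _); rewrite size_iota; apply.
      - by move=> k'; rewrite mem_iota; have := ltn_ord (v i0); lia.
      - by move=> k'; rewrite mem_iota; have := ltn_ord (v i1); have := ltn_ord (v i0); lia.
      by move=> b; rewrite mem_iota => hb'; have hv0 := ltn_ord (v i0); apply: Ck; [exact: ins1|right; rewrite upd_same; lia].
    lia.
  have hkr : (k <= rho)%N by lia.
  have row : forall l v, insl 2 v0 v -> v i0 = k :> nat -> n.-1 - v i1 = l -> v \in S.
    elim/ltn_ind => l IHl v hv ha hl.
    case: (ltnP (n.-1 - k) (v i1)) => hb; first by apply: Ck => //; right.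
    case: (leqP (v i0 + v i1) rho) => hF; first exact: H3F.
    apply: hclos => //.
    have hvb := ltn_ord (v i1).
    set m := rho.+1 - (n.-1 - v i1).
    have c0 : (k + m <= cnt S v i0)%N.
      have := @cnt_seq n d S v i0 (iota 0 k ++ iota (n - m) m).
      rewrite size_cat !size_iota; apply.
      - rewrite cat_uniq !iota_uniq andbT andTb.
        by apply/hasPn => k'; rewrite !mem_iota; lia.
      - by move=> k'; rewrite mem_cat !mem_iota; lia.
      - by move=> k'; rewrite mem_cat !mem_iota; lia.
      move=> b; rewrite mem_cat !mem_iota => /orP [hb'|hb'].
        by apply: Ck; [exact: ins0|left; rewrite upd_same; lia].
      apply: H3T; first exact: ins0.
      rewrite upd_same upd_other //; lia.
    have c1 : ((rho - k).+1 + (n.-1 - v i1) <= cnt S v i1)%N.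
      have := @cnt_seq n d S v i1 (iota 0 (rho - k).+1 ++ iota (v i1).+1 (n.-1 - v i1)).
      rewrite size_cat !size_iota; apply.
      - rewrite cat_uniq !iota_uniq andbT andTb.
        by apply/hasPn => k'; rewrite !mem_iota; lia.
      - by move=> k'; rewrite mem_cat !mem_iota; lia.
      - by move=> k'; rewrite mem_cat !mem_iota; lia.
      move=> b; rewrite mem_cat !mem_iota => /orP [hb'|hb'].
        apply: H3F; first exact: ins1.
        rewrite upd_same upd_other //; lia.
      apply: (IHl (n.-1 - b)); [|exact: ins1|by rewrite upd_other|by rewrite upd_same].
      have := ltn_ord b; lia.
    lia.
  have col : forall a v, insl 2 v0 v -> v i1 = n.-1 - k :> nat -> v i0 = a :> nat -> v \in S.
    elim/ltn_ind => a IHa v hv hb ha.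
    case: (ltnP (v i0) k) => hak; first by apply: Ck => //; left.
    case: (eqVneq (v i0 : nat) k) => hak'.
      exact: (row _ v hv hak' erefl).
    case: (leqP (n - (v i0).+1 + (n - (v i1).+1)) rho) => hT; first exact: H3T.
    apply: hclos => //.
    have hva := ltn_ord (v i0).
    have c0 : (a + (rho - k).+1 <= cnt S v i0)%N.
      have := @cnt_seq n d S v i0 (iota 0 a ++ iota (n - (rho - k).+1) (rho - k).+1).
      rewrite size_cat !size_iota; apply.
      - rewrite cat_uniq !iota_uniq andbT andTb.
        by apply/hasPn => k'; rewrite !mem_iota; lia.
      - by move=> k'; rewrite mem_cat !mem_iota; lia.
      - by move=> k'; rewrite mem_cat !mem_iota; lia.
      move=> b; rewrite mem_cat !mem_iota => /orP [hb'|hb'].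
        apply: (IHa b); [lia|exact: ins0|by rewrite upd_other|by rewrite upd_same].
      apply: H3T; first exact: ins0.
      rewrite upd_same upd_other //; lia.
    have c1 : (k + (rho.+1 - a) <= cnt S v i1)%N.
      have := @cnt_seq n d S v i1 (iota (n - k) k ++ iota 0 (rho.+1 - a)).
      rewrite size_cat !size_iota; apply.
      - rewrite cat_uniq !iota_uniq andbT andTb.
        by apply/hasPn => k'; rewrite !mem_iota; lia.
      - by move=> k'; rewrite mem_cat !mem_iota; lia.
      - by move=> k'; rewrite mem_cat !mem_iota; lia.
      move=> b; rewrite mem_cat !mem_iota => /orP [hb'|hb'].
        by apply: Ck; [exact: ins1|right; rewrite upd_same; lia].
      apply: H3F; first exact: ins1.
      rewrite upd_same upd_other //; lia.
    lia.
  move=> v hv [ha|hb].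
    case: (ltnP (v i0) k) => hak; first by apply: Ck => //; left.
    by apply: (row _ v hv _ erefl); lia.
  case: (ltnP (n.-1 - k) (v i1)) => hb'; first by apply: Ck => //; right.
  by apply: (col _ v hv _ erefl); lia.
move=> v hv; apply: (claim n v hv); left; exact: ltn_ord.
Qed.

Lemma sum_sub_pred d (P Q : pred 'I_d) (f : 'I_d -> nat) : (forall i, P i -> Q i) ->
  (\sum_(i < d | P i) f i <= \sum_(i < d | Q i) f i)%N.
Proof.
move=> H; rewrite [X in (_ <= X)%N](bigID P) /=.
have -> : \sum_(i < d | Q i && P i) f i = \sum_(i < d | P i) f i.
  by apply: eq_bigl => i; case Pi: (P i); rewrite ?andbT ?andbF ?(H i Pi).
exact: leq_addr.
Qed.

Lemma GLstep n d r (S : {set vtx n d}) j : (2 <= j)%N -> (j < d)%N ->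
  (forall v, (r <= \sum_(i < d) cnt S v i)%N -> v \in S) -> GLprop r S j -> GLprop r S j.+1.
Proof.
move=> j2 jd hcl IH v0 rho e H1 H2 Hn H3.
set ij := Ordinal jd.
have ijv : (ij : nat) = j by [].
suff main : forall hh v, insl j.+1 v0 v -> minn (v ij) (n.-1 - v ij) = hh -> v \in S.
  by move=> v hv; apply: (main _ v hv erefl).
elim/ltn_ind => hh IHh v hv hvh.
have hvij := ltn_ord (v ij).
have cj : forall u, insl j.+1 v0 u -> u ij = v ij -> (hh.*2 <= cnt S u ij)%N.
  move=> u hu huv.
  have := @cnt_seq n d S u ij (iota 0 hh ++ iota (n - hh) hh).
  rewrite size_cat !size_iota addnn; apply.
  - rewrite cat_uniq !iota_uniq andbT andTb; apply/hasPn => k; rewrite !mem_iota; lia.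
  - by move=> k; rewrite mem_cat !mem_iota; lia.
  - by move=> k; rewrite mem_cat !mem_iota huv; lia.
  move=> b; rewrite mem_cat !mem_iota => hb.
  have hbn := ltn_ord b.
  apply: (IHh (minn b (n.-1 - b))); first by lia.
    by apply: insl_upd => //; rewrite ijv.
  by rewrite upd_same.
case: (ltnP rho hh) => hrh.
  apply: hcl; rewrite (bigID (fun i : 'I_d => (i < j.+1)%N)) /=.
  have hA : (cnt S v ij <= \sum_(i < d | (i < j.+1)%N) cnt S v i)%N.
    by rewrite (bigD1 ij) /= ?ijv ?ltnSn // leq_addr.
  apply: (leq_trans H2); rewrite addnC; apply: leq_add; last exact: H1.
  apply: leq_trans hA; apply: leq_trans (cj v hv erefl); lia.
have hu' : forall u, insl j v u -> insl j.+1 v0 u.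
  by move=> u hu i hi; rewrite hu ?hv //; lia.
have huv : forall u, insl j v u -> u ij = v ij.
  by move=> u hu; apply: hu; rewrite ijv.
apply: (IH v (rho - hh) (e + hh.*2)) => //.
- move=> u hu.
  rewrite (bigD1 ij) /=; last by rewrite ?ijv ltnn.
  rewrite addnC; apply: leq_add; first exact: cj (hu' u hu) (huv u hu).
  apply: leq_trans (H1 u (hu' u hu)) _; apply: sum_sub_pred => i hi.
  rewrite -leqNgt in hi; apply/andP; split; first by rewrite -leqNgt; lia.
  by apply/eqP => e'; rewrite e' ijv in hi; lia.
- lia.
- lia.
move=> u t hu ht hs.
set bb := (n.-1 - v ij < v ij)%N.
apply: (H3 u (setb t ij bb) (hu' u hu)); first by apply: setb_T => //; rewrite ijv.
rewrite (bigD1 ij) /=; last by rewrite ?ijv ltnSn.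
have -> : \sum_(i < d | (i < j.+1)%N && (i != ij)) (refl (setb t ij bb) u i : nat) =
          \sum_(i < d | (i < j)%N) (refl t u i : nat).
  apply: eq_big => i.
    case: (eqVneq i ij) => [->|ne]; first by rewrite andbF ijv ltnn.
    rewrite andbT ltnS leq_eqVlt.
    have -> : (val i == j) = false.
      by apply/eqP => e'; move/eqP: ne; apply; apply/val_inj.
    by [].
  by move=> /andP [_ ne]; rewrite /refl /setb !ffunE (negbTE ne).
rewrite /refl /setb !ffunE eqxx -/(refl t u) huv //.
rewrite -(subnKC hrh); apply: leq_add hs.
rewrite /bb; case: ifP => hbb /=; lia.
Qed.

Unset Implicit Arguments.

Theorem lemma4p2 (n r d : nat) :
  (0 < n)%N -> (0 < r)%N -> (0 < d)%N -> (r + 1 <= n)%N -> (2 <= d)%N ->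
  percolating r (calC n d r).
Proof.
move=> hn0 hr hd hrn hd2.
have [k hk] := boot_fix r (calC n d r).
move=> v; exists k.
set S := boot r (calC n d r) k.
have hcl := closed_fix hk.
have hC : calC n d r \subset S := boot_sub _ _ _.
have hrn' : (r.+1 <= n)%N by rewrite -addn1.
have P1 := part1 hd2 hrn' hr hC hcl.
have GL : forall m, (m + 2 <= d)%N -> GLprop r S (m + 2).
  elim=> [|m IHm] hm; first exact: GL2.
  rewrite addSn; apply: GLstep; [lia|lia|exact: hcl|apply: IHm; lia].
have := GL (d - 2) (eq_leq (subnK hd2)); rewrite subnK // => G.
have [hr1 hr2] := cr_facts hr.
apply: (G v (cr r) 0) => //; first lia.
move=> u t _ ht hs; rewrite -(reflK t u); apply: P1 => //.
have e : \sum_(i < d | (i < d)%N) (refl t u i : nat) = \sum_(i < d) (refl t u i : nat).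
  by apply: eq_bigl => i; rewrite ltn_ord.
by rewrite -e.
Qed.
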